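(* Let $S$ be a semigroup with finite $\mathcal{R}$-height, and let $B$ be a bi-ideal of $S$ in which every element has a local right identity in $B$ (i.e. for every $b\in B$ there is $u\in B$ with $b=bu$). Then $\mathrm{H}_{\mathcal{R}}(B)=n$, where $n$ is the maximal length of a chain of $\mathcal{R}$-classes of $S$ each of which intersects $B$.
   Context: For a semigroup $S$, $S^1$ denotes $S$ with an identity adjoined if necessary. Green's preorder: $a\leq_{\mathcal{R}} b$ iff $aS^1\subseteq bS^1$; $\mathcal{R}$ is the associated equivalence. $\mathcal{R}$-classes are ordered by $R_a\leq R_b$ iff $a\leq_{\mathcal{R}} b$, and the $\mathcal{R}$-height $\mathrm{H}_{\mathcal{R}}$ is the supremum of the cardinalities of chains of $\mathcal{R}$-classes. A bi-ideal of $S$ is a non-empty subset $B$ with $BS^1B\subseteq B$; $\mathrm{H}_{\mathcal{R}}(B)$ is computed in the semigroup $B$ itself. *)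

(* Defs.v *)
From Stdlib Require Import List.
Import ListNotations.

Section SemigroupDefs.
Variable T : Type.
Variable op : T -> T -> T.

Definition associative_op : Prop :=
  forall x y z, op x (op y z) = op (op x y) z.

(* Green's R-preorder computed inside the subsemigroup with carrier P
   (P = fun _ => True gives the preorder of S itself):
   a <=_R b  iff  a P^1 subset b P^1  iff  a = b or a = b x for some x in P. *)
Definition leR (P : T -> Prop) (a b : T) : Prop :=
  a = b \/ exists x, P x /\ a = op b x.

Definition ltR (P : T -> Prop) (a b : T) : Prop :=
  leR P a b /\ ~ leR P b a.

(* A list of representatives [a1; ...; ak] of a chain of R-classes
   R_{a1} > R_{a2} > ... > R_{ak} (pairwise strictly comparable, hence
   k pairwise distinct, totally ordered R-classes). *)
Fixpoint R_chain (P : T -> Prop) (l : list T) : Prop :=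
  match l with
  | [] => True
  | a :: l' => Forall (fun b => ltR P b a) l' /\ R_chain P l'
  end.

Definition finite_R_height : Prop :=
  exists N : nat, forall l, R_chain (fun _ => True) l -> length l <= N.

Definition R_height_eq (P : T -> Prop) (n : nat) : Prop :=
  (exists l, Forall P l /\ R_chain P l /\ length l = n) /\
  (forall l, Forall P l -> R_chain P l -> length l <= n).

(* bi-ideal: non-empty, B S^1 B subset B *)
Definition bi_ideal (B : T -> Prop) : Prop :=
  (exists b, B b) /\
  (forall b1 b2, B b1 -> B b2 -> B (op b1 b2)) /\
  (forall b1 s b2, B b1 -> B b2 -> B (op (op b1 s) b2)).

(* n is the maximal length of a chain of R-classes of S each of which
   intersects B (representatives chosen in B). *)
Definition max_chain_meeting (B : T -> Prop) (n : nat) : Prop :=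
  (exists l, Forall B l /\ R_chain (fun _ => True) l /\ length l = n) /\
  (forall l, Forall B l -> R_chain (fun _ => True) l -> length l <= n).

End SemigroupDefs.
Arguments associative_op {T}.
Arguments finite_R_height {T}.
Arguments bi_ideal {T}.
Arguments R_height_eq {T}.
Arguments max_chain_meeting {T}.
Arguments leR {T}.
Arguments ltR {T}.
Arguments R_chain {T}.

(* Main.v *)
Require Import Defs.
From Stdlib Require Import List.

Lemma leR_equiv (T : Type) (op : T -> T -> T) (B : T -> Prop) :
  associative_op op -> bi_ideal op B ->
  (forall b, B b -> exists u, B u /\ b = op b u) ->
  forall a b, B a -> B b -> (leR op B a b <-> leR op (fun _ => True) a b).
Proof.
  intros Hass [_ [_ Hbi]] Hloc a b Ha Hb; unfold leR; split.
  - intros [H|[x [_ H]]]; [left; exact H | right; exists x; split; auto].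
  - intros [H|[x [_ H]]]; [left; exact H|].
    right. destruct (Hloc a Ha) as [u [Hu Eu]]. destruct (Hloc b Hb) as [v [Hv Ev]].
    exists (op (op v x) u). split.
    + apply Hbi; assumption.
    + rewrite Eu at 1. rewrite H. rewrite Ev at 1.
      rewrite !Hass. reflexivity.
Qed.

Lemma chain_equiv (T : Type) (op : T -> T -> T) (B : T -> Prop) :
  associative_op op -> bi_ideal op B ->
  (forall b, B b -> exists u, B u /\ b = op b u) ->
  forall l, Forall B l -> (R_chain op B l <-> R_chain op (fun _ => True) l).
Proof.
  intros Hass Hbi Hloc l. induction l as [|a l IH]; intros HF; simpl; [tauto|].
  inversion HF; subst. specialize (IH H2).
  assert (Hlt : forall b, In b l -> (ltR op B b a <-> ltR op (fun _ => True) b a)).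
  { intros b Hin. assert (Bb : B b) by (rewrite Forall_forall in H2; auto).
    unfold ltR. rewrite (leR_equiv _ _ _ Hass Hbi Hloc b a Bb H1).
    rewrite (leR_equiv _ _ _ Hass Hbi Hloc a b H1 Bb). tauto. }
  rewrite !Forall_forall. split; intros [X Y]; split; try tauto;
    intros b Hin; apply (Hlt b Hin); auto.
Qed.

Theorem proposition3p5 (T : Type) (op : T -> T -> T) (B : T -> Prop) (n : nat) :
  associative_op op ->
  finite_R_height op ->
  bi_ideal op B ->
  (forall b, B b -> exists u, B u /\ b = op b u) ->
  max_chain_meeting op B n ->
  R_height_eq op B n.
Proof.
  intros Hass _ Hbi Hloc [[l [HF [HC HL]]] Hmax]. split.
  - exists l. split; [exact HF|]. split; [|exact HL].
    apply (chain_equiv _ _ _ Hass Hbi Hloc l HF). exact HC.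
  - intros l' HF' HC'. apply Hmax; [exact HF'|].
    apply (chain_equiv _ _ _ Hass Hbi Hloc l' HF'). exact HC'.
Qed.
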